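(* Let $T\ge 1$ (search step budget) and $B\ge 1$ (maximum branching factor) be integers, and suppose the vocabulary contains state tokens $S_1,\dots,S_{TB+1}$, continuous value tokens $V_\alpha$ for $\alpha\in[0,1]$, and the structural markers \texttt{\%}, \texttt{\#}, \texttt{?}. Then there exist 3-layer Transformers (in the model described in the context) with embedding dimension $d=10+TB$ that exactly implement the uniform leaf sampling policy and the greedy leaf sampling policy, respectively, when the search trajectory is encoded sequentially using Leaf-Based Tokenization: for every (partial) search trajectory, when the Leaf-Based-Tokenized trace ending in the token \texttt{?} is given as input, the distribution of the Transformer's next output token equals the distribution over the next state $S_{s_t}$ prescribed by the respective policy.
   Context: Search setting: a hidden finite rooted tree with root state $s_0$, successor (children) function $N$, and at most $TB+1$ states that can appear in a trace (assume exactly $TB+1$ states, each identified with a state token $S_i$). An agent interacts for steps $t=0,1,\dots,T$: at step $t$ it selects a state $s_t$ and the environment reveals a value $v_t\in[0,1]$ (a noisy estimate of the state's value) and the children $N(s_t)$. The frontier is $F_t=\bigl(\bigcup_{i=0}^t N(s_i)\bigr)\setminus\{s_0,\dots,s_t\}$, and $s_{t+1}$ must be chosen from $F_t$. Uniform leaf sampling: $s_t$ is drawn uniformly at random from $F_{t-1}$. Greedy leaf sampling: $s_t=\arg\max_{s\in F_{t-1}}\hat v(s)$, where $\hat v(s)$ is the observed value $v$ of the parent of $s$, with ties broken uniformly at random. Leaf-Based Tokenization: writing $N(s_t)=\{s_{t,1},s_{t,2},\dots\}$, a trajectory $((s_0,v_0,N(s_0)),(s_1,v_1,N(s_1)),\dots)$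 is encoded as the token sequence $\texttt{?}\,S_{s_0}\,\texttt{\%}\,V_{v_0}\,\texttt{\#}\,S_{s_{0,1}}\,S_{s_{0,2}}\cdots\texttt{?}\,S_{s_1}\,\texttt{\%}\,V_{v_1}\,\texttt{\#}\,S_{s_{1,1}}\,S_{s_{1,2}}\cdots\texttt{?}\cdots$; the model must predict the state token immediately after each \texttt{?}. The value token $V_\alpha$ stores $\alpha$ in a dedicated embedding coordinate. Transformer model: each token is embedded in $\mathbb{R}^d$; fixed positional embeddings $p_1,\dots,p_n$ are added, $X^{(0)}=X+[p_1,\dots,p_n]$. A block with matrices $Q,K,V\in\mathbb{R}^{d\times d}$ and a token-wise map $f:\mathbb{R}^d\to\mathbb{R}^d$ (any piecewise continuous function) computes $\mathrm{Attn}(X)=X+VX\,\mathrm{hardmax}(X^\top K^\top QX)$ (causal, each token attending to itself and preceding tokens) and $\mathrm{Block}(X)=\mathrm{Attn}(X)+[f(\mathrm{Attn}(X)_{:,j})]_j$, where $\mathrm{hardmax}(z)_i=\mathbf{1}[z_i=\max_k z_k]/\sum_j\mathbf{1}[z_j=\max_k z_k]$. There is no layer normalization. An $\ell$-layer Transformer applies $\ell$ blocks; the logits are $U X^{(\ell)}_{:,n}$ for an unembedding matrix $U$ applied to the last token, and the next token is the argmax logit with ties broken uniformly at random. *)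

(* Defs.v *)
From HB Require Import structures.
From mathcomp Require Import all_boot all_order all_algebra.
From mathcomp Require Import reals.
From Stdlib Require List.
Set Implicit Arguments.
Unset Strict Implicit.
Unset Printing Implicit Defensive.
Import Order.TTheory GRing.Theory Num.Theory.
Local Open Scope ring_scope.

Section Transformer.
Variable R : realType.

(* Tokens.  n = number of states (here TB+1); state i : 'I_n is the   *)
(* token S_{i+1}.  TV a is the value token V_a; only a in [0,1] is in *)
(* the vocabulary (see in_vocab).                                      *)
Inductive token (n : nat) :=
  | TQ
  | TPct
  | THash
  | TS of 'I_n
  | TV of R.

Definition in_vocab n (tok : token n) : Prop :=
  match tok with TV a => 0 <= a <= 1 | _ => True end.

Definition is_value_token n (tok : token n) : bool :=
  match tok with TV _ => true | _ => false end.

Record halfspace (d : nat) := HalfSpace {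
  hs_a : 'rV[R]_d; hs_b : R; hs_strict : bool }.

Definition in_hs d (h : halfspace d) (x : 'cV[R]_d) : bool :=
  if hs_strict h then (hs_a h *m x) 0 0 < hs_b h
  else (hs_a h *m x) 0 0 <= hs_b h.

Definition in_piece d (P : seq (halfspace d)) (x : 'cV[R]_d) : bool :=
  all (fun h => in_hs h x) P.

Definition continuous_on d (A : 'cV[R]_d -> bool) (f : 'cV[R]_d -> 'cV[R]_d) :=
  forall x, A x -> forall eps : R, 0 < eps -> exists2 delta : R, 0 < delta &
    forall y, A y -> (forall i, `|y i 0 - x i 0| < delta) ->
      forall i, `|f y i 0 - f x i 0| < eps.

Definition piecewise_continuous d (f : 'cV[R]_d -> 'cV[R]_d) : Prop :=
  exists Ps : seq (seq (halfspace d)),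
    (forall x, has (fun P => in_piece P x) Ps) /\
    (forall P, List.In P Ps -> continuous_on (in_piece P) f).

Record layer (d : nat) := Layer {
  lQ : 'M[R]_d; lK : 'M[R]_d; lV : 'M[R]_d;
  lf : 'cV[R]_d -> 'cV[R]_d }.

Definition score d (L : layer d) (X : seq 'cV[R]_d) (j i : nat) : R :=
  (((X`_i)^T *m (lK L)^T *m lQ L *m X`_j) 0 0).

Definition attn_col d (L : layer d) (X : seq 'cV[R]_d) (j : nat) : 'cV[R]_d :=
  let sc := score L X j in
  let m := \big[Num.max/sc 0%N]_(i < j.+1) sc i in
  let M := [seq i <- iota 0 j.+1 | sc i == m] in
  X`_j + lV L *m ((size M)%:R^-1 *: \sum_(i <- M) X`_i).

Definition attn d (L : layer d) (X : seq 'cV[R]_d) : seq 'cV[R]_d :=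
  mkseq (attn_col L X) (size X).

Definition block d (L : layer d) (X : seq 'cV[R]_d) : seq 'cV[R]_d :=
  [seq a + lf L a | a <- attn L X].

Record transformer (d n : nat) := Transformer {
  emb : token n -> 'cV[R]_d;
  pos : nat -> 'cV[R]_d;            (* fixed positional embeddings p_1, p_2, ... (0-indexed) *)
  layers : seq (layer d);
  unemb : token n -> 'rV[R]_d }.

Definition wf_transformer d n (M : transformer d n) : Prop :=
  (forall L, List.In L (layers M) -> piecewise_continuous (lf L)) /\
  exists (k : 'I_d) (base : 'cV[R]_d),
    base k 0 = 0 /\
    (forall a : R, emb M (TV n a) = base + a *: delta_mx k 0) /\
    (forall tok, ~~ is_value_token tok -> emb M tok k 0 = 0).

Definition run d n (M : transformer d n) (inp : seq (token n)) : seq 'cV[R]_d :=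
  foldl (fun X L => block L X)
    (mkseq (fun j => emb M (nth (TQ n) inp j) + pos M j) (size inp))
    (layers M).

Definition logit d n (M : transformer d n) (inp : seq (token n)) (tok : token n) : R :=
  (unemb M tok *m (run M inp)`_(size inp).-1) 0 0.

Definition is_argmax d n (M : transformer d n) inp (tok : token n) : Prop :=
  in_vocab tok /\ forall tok', in_vocab tok' -> logit M inp tok' <= logit M inp tok.

Definition next_token_dist d n (M : transformer d n) inp (p : token n -> R) : Prop :=
  exists A : seq (token n),
    A <> [::] /\ List.NoDup A /\
    (forall tok, List.In tok A <-> is_argmax M inp tok) /\
    (forall tok, List.In tok A -> p tok = (size A)%:R^-1) /\
    (forall tok, ~ List.In tok A -> p tok = 0).

Definition is_tree n (B : nat) (root : 'I_n) (N : 'I_n -> seq 'I_n) : Prop :=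
  (forall s, uniq (N s)) /\
  (forall s, (size (N s) <= B)%N) /\
  (forall s, root \notin N s) /\
  (forall x y s, s \in N x -> s \in N y -> x = y) /\
  (forall s, connect (fun x y => y \in N x) root s).

(* a trajectory is the list of (s_i, v_i), i = 0 .. t-1 *)
Definition frontier n (N : 'I_n -> seq 'I_n) (traj : seq ('I_n * R)) : {set 'I_n} :=
  [set s | has (fun sv => s \in N sv.1) traj & s \notin [seq sv.1 | sv <- traj]].

Definition valid_traj n (T : nat) (root : 'I_n) (N : 'I_n -> seq 'I_n)
    (traj : seq ('I_n * R)) : Prop :=
  (1 <= size traj <= T)%N /\
  (head (root, 0) traj).1 = root /\
  (forall sv, List.In sv traj -> 0 <= sv.2 <= 1) /\
  (forall i, (i.+1 < size traj)%N ->
     (nth (root, 0) traj i.+1).1 \in frontier N (take i.+1 traj)) /\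
  frontier N traj != set0.

Definition encode n (N : 'I_n -> seq 'I_n) (traj : seq ('I_n * R)) : seq (token n) :=
  flatten [seq [:: TQ n; TS sv.1; TPct n; TV n sv.2; THash n] ++ map (@TS n) (N sv.1)
          | sv <- traj] ++ [:: TQ n].

Definition uniform_policy n (N : 'I_n -> seq 'I_n) (traj : seq ('I_n * R))
    (tok : token n) : R :=
  match tok with
  | TS s => if s \in frontier N traj then #|frontier N traj|%:R^-1 else 0
  | _ => 0
  end.

Definition vhat n (N : 'I_n -> seq 'I_n) (traj : seq ('I_n * R)) (s : 'I_n) : R :=
  (nth (s, 0) traj (find (fun sv => s \in N sv.1) traj)).2.

Definition greedy_set n (N : 'I_n -> seq 'I_n) (traj : seq ('I_n * R)) : {set 'I_n} :=
  [set s in frontier N traj |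
     [forall s', (s' \in frontier N traj) ==> (vhat N traj s' <= vhat N traj s)]].

Definition greedy_policy n (N : 'I_n -> seq 'I_n) (traj : seq ('I_n * R))
    (tok : token n) : R :=
  match tok with
  | TS s => if s \in greedy_set N traj then #|greedy_set N traj|%:R^-1 else 0
  | _ => 0
  end.

Definition implements d n (T B : nat) (M : transformer d n)
    (policy : ('I_n -> seq 'I_n) -> seq ('I_n * R) -> token n -> R) : Prop :=
  forall (root : 'I_n) (N : 'I_n -> seq 'I_n) (traj : seq ('I_n * R)),
    is_tree B root N -> valid_traj T root N traj ->
    next_token_dist M (encode N traj) (policy N traj).

End Transformer.

(* Main.v *)
Require Import Defs.
From HB Require Import structures.
From mathcomp Require Import all_boot all_order all_algebra.
From mathcomp Require Import reals.
From mathcomp Require Import ring lra zify.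
Import Order.TTheory GRing.Theory Num.Theory.
Local Open Scope ring_scope.
Set Implicit Arguments.
Unset Strict Implicit.
Unset Printing Implicit Defensive.

Section Cont.
Variable R : realType.
Variable d : nat.
Implicit Types (x y : 'cV[R]_d).

Definition vc (F : 'I_d -> 'cV[R]_d -> R) :=
  (forall x, exists Bd : R, forall i, `|F i x| <= Bd) /\
  (forall x (eps : R), 0 < eps -> exists2 delta : R, 0 < delta &
     forall y, (forall j, `|y j 0 - x j 0| < delta) -> forall i, `|F i y - F i x| < eps).

Lemma fin_bound (c : 'I_d -> R) : exists Bd : R, forall i, `|c i| <= Bd.
Proof.
exists (\sum_i `|c i|) => i.
rewrite (bigD1 i) //= lerDl sumr_ge0 // => j _.
Qed.

Lemma vc_const (c : 'I_d -> R) : vc (fun i _ => c i).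
Proof.
split; first by move=> _; exact: fin_bound.
move=> x eps he; exists 1 => // y _ i; by rewrite subrr normr0.
Qed.

Lemma vc_coord (g : 'I_d -> 'I_d) : vc (fun i y => y (g i) 0).
Proof.
split; first by move=> x; exact: (fin_bound (fun i => x (g i) 0)).
move=> x eps he; exists eps => // y hy i; exact: hy.
Qed.

Lemma vc_add F G : vc F -> vc G -> vc (fun i y => F i y + G i y).
Proof.
move=> [bF cF] [bG cG]; split.
  move=> x; have [b1 h1] := bF x; have [b2 h2] := bG x.
  exists (b1 + b2) => i; apply: le_trans (ler_normD _ _) _; exact: lerD.
move=> x eps he.
have he2 : 0 < eps / 2 by rewrite divr_gt0.
have [d1 hd1 c1] := cF x _ he2; have [d2 hd2 c2] := cG x _ he2.
exists (Num.min d1 d2); first by rewrite lt_min hd1 hd2.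
move=> y hy i.
have hy1 : forall j, `|y j 0 - x j 0| < d1 by move=> j; have := hy j; rewrite lt_min => /andP[].
have hy2 : forall j, `|y j 0 - x j 0| < d2 by move=> j; have := hy j; rewrite lt_min => /andP[].
have := c1 _ hy1 i; have := c2 _ hy2 i => a b.
have -> : F i y + G i y - (F i x + G i x) = (F i y - F i x) + (G i y - G i x) by ring.
apply: le_lt_trans (ler_normD _ _) _.
have -> : eps = eps / 2 + eps / 2 by field.
exact: ltrD.
Qed.

Lemma vc_mul F G : vc F -> vc G -> vc (fun i y => F i y * G i y).
Proof.
move=> [bF cF] [bG cG]; split.
  move=> x; have [b1 h1] := bF x; have [b2 h2] := bG x.
  exists (b1 * b2) => i; rewrite normrM; apply: ler_pM => //.
move=> x eps he.
have [b1 h1] := bF x; have [b2 h2] := bG x.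
set K := `|b1| + `|b2| + 1.
have hK : 0 < K by rewrite /K ltr_pwDr // addr_ge0.
set e := Num.min 1 (eps / (2 * K)).
have he0 : 0 < e by rewrite lt_min ltr01 divr_gt0 // mulr_gt0.
have he1 : e <= 1 by rewrite ge_min lexx.
have heK : e * K <= eps / 2.
  have : e <= eps / (2 * K) by rewrite ge_min lexx orbT.
  rewrite ler_pdivlMr ?mulr_gt0 // => h.
  rewrite ler_pdivlMr //; apply: le_trans h; rewrite le_eqVlt; apply/orP; left; apply/eqP; ring.
have [d1 hd1 c1] := cF x _ he0; have [d2 hd2 c2] := cG x _ he0.
exists (Num.min d1 d2); first by rewrite lt_min hd1 hd2.
move=> y hy i.
have hy1 : forall j, `|y j 0 - x j 0| < d1 by move=> j; have := hy j; rewrite lt_min => /andP[].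
have hy2 : forall j, `|y j 0 - x j 0| < d2 by move=> j; have := hy j; rewrite lt_min => /andP[].
have a1 := c1 _ hy1 i; have a2 := c2 _ hy2 i.
have -> : F i y * G i y - F i x * G i x = (F i y - F i x) * G i y + F i x * (G i y - G i x) by ring.
apply: le_lt_trans (ler_normD _ _) _.
rewrite !normrM.
have hGy : `|G i y| <= `|b2| + 1.
  have -> : G i y = G i x + (G i y - G i x) by ring.
  apply: le_trans (ler_normD _ _) _; apply: lerD.
    exact: le_trans (h2 i) (ler_norm _).
  exact: le_trans (ltW a2) he1.
have hFx : `|F i x| <= `|b1| := le_trans (h1 i) (ler_norm _).
have t1 : `|F i y - F i x| * `|G i y| <= e * (`|b2| + 1) by apply: ler_pM => //; exact: ltW.
have t2 : `|F i x| * `|G i y - G i x| <= `|b1| * e by apply: ler_pM => //; exact: ltW.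
have t3 : e * (`|b2| + 1) + `|b1| * e = e * K by rewrite /K; ring.
have t4 : eps / 2 < eps by rewrite ltr_pdivrMr // ltr_pMr // ltr1n.
apply: le_lt_trans t4; apply: le_trans heK; rewrite -t3; exact: lerD.
Qed.

Lemma vc_ext F G : (forall i y, F i y = G i y) -> vc F -> vc G.
Proof.
move=> e [b c]; split.
  by move=> x; have [B h] := b x; exists B => i; rewrite -e.
move=> x eps he; have [dl hd h] := c x eps he; exists dl => // y hy i; rewrite -!e; exact: h.
Qed.

Lemma vc_pc (F : 'I_d -> 'cV[R]_d -> R) : vc F ->
  piecewise_continuous (fun y => \col_i F i y).
Proof.
move=> [_ c]; exists [:: [::]]; split => // P; case => // <- x _ eps he.
have [dl hd h] := c x eps he; exists dl => // y _ hy i; rewrite !mxE; exact: h.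
Qed.

End Cont.

Section Model.
Variable R : realType.
Variables T B : nat.
Variable beta : R.

Definition nn := (T * B + 1)%N.
Definition dd := (10 + T * B)%N.

Lemma cltd c : (c < 9)%N -> (nn + c < dd)%N.
Proof. rewrite /nn /dd; lia. Qed.
Lemma nld : (nn <= dd)%N.
Proof. rewrite /nn /dd; lia. Qed.

Definition oK : 'I_dd := Ordinal (cltd (c:=0) isT).
Definition oFlag : 'I_dd := Ordinal (cltd (c:=1) isT).
Definition oOne : 'I_dd := Ordinal (cltd (c:=2) isT).
Definition oLen : 'I_dd := Ordinal (cltd (c:=3) isT).
Definition oPrevQ : 'I_dd := Ordinal (cltd (c:=4) isT).
Definition oIsQ : 'I_dd := Ordinal (cltd (c:=5) isT).
Definition oPv : 'I_dd := Ordinal (cltd (c:=6) isT).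
Definition stc (s : 'I_nn) : 'I_dd := widen_ord nld s.

Notation tok := (token R nn).

Definition ev (t : tok) (i : nat) : R :=
  match t with
  | TQ => (if i == (nn + 1)%N then 1 else 0) + (if i == (nn + 5)%N then 1 else 0)
  | TS s => if i == nat_of_ord s then 1 else 0
  | TV a => (if i == (nn + 1)%N then 1 else 0) + (if i == (nn + 0)%N then a else 0)
  | _ => 0
  end.

Definition posf (j : nat) (i : nat) : R :=
  (if i == (nn + 1)%N then j%:R / (j%:R + 1) else 0) +
  (if i == (nn + 2)%N then 1 else 0) +
  (if i == (nn + 3)%N then j%:R + 1 else 0).

Definition base : 'cV[R]_dd := \col_i (if nat_of_ord i == (nn + 1)%N then 1 else 0).

Definition embd (t : tok) : 'cV[R]_dd :=
  match t with
  | TV a => base + a *: delta_mx oK 0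
  | _ => \col_i ev t i
  end.

Lemma embE t i : embd t i 0 = ev t i.
Proof.
case: t => [|||s|a]; rewrite /embd ?mxE //=.
congr (_ + _).
rewrite eqxx andbT.
rewrite -val_eqE /=.
by rewrite mulr_natr; case: (_ == _).
Qed.


Definition posv (j : nat) : 'cV[R]_dd := \col_i posf j i.

Lemma mulmx_sel (g : 'I_dd -> 'I_dd) (c : 'I_dd -> R) (x : 'cV[R]_dd) i :
  ((\matrix_(a, b) (if b == g a then c a else 0)) *m x) i 0 = c i * x (g i) 0.
Proof.
rewrite mxE (bigD1 (g i)) //= mxE eqxx big1 ?addr0 // => b hb.
by rewrite mxE (negPf hb) mul0r.
Qed.

Lemma score_delta (u v : 'cV[R]_dd) a b :
  ((u^T *m (1%:M)^T *m delta_mx a b *m v) 0 0) = u a 0 * v b 0.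
Proof.
rewrite trmx1 mulmx1 mxE (bigD1 b) //= big1 ?addr0.
  rewrite mxE (bigD1 a) //= big1 ?addr0.
    by rewrite !mxE !eqxx mulr1.
  by move=> k hk; rewrite !mxE (negPf hk) mulr0.
move=> k hk; rewrite mxE big1 ?mul0r // => l _.
by rewrite !mxE (negPf hk) andbF mulr0.
Qed.

Lemma size_block d (L : layer R d) X : size (block L X) = size X.
Proof. by rewrite /block size_map /attn size_mkseq. Qed.

Lemma nth_block d (L : layer R d) X j : (j < size X)%N ->
  (block L X)`_j = attn_col L X j + lf L (attn_col L X j).
Proof.
move=> hj; rewrite /block (nth_map 0); last by rewrite /attn size_mkseq.
by rewrite /attn nth_mkseq.
Qed.

Lemma bigmax_seq_ge (I : eqType) (F : I -> R) x0 (r : seq I) i : i \in r ->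
  F i <= \big[Num.max/x0]_(j <- r) F j.
Proof.
elim: r => // a r IH; rewrite inE big_cons le_max => /orP[/eqP ->|hi].
  by rewrite lexx.
by rewrite IH ?orbT.
Qed.

Lemma bigmax_ge (F : nat -> R) k (i : 'I_k) :
  F i <= \big[Num.max/F 0%N]_(i < k) F i.
Proof. exact: (bigmax_seq_ge (fun j : 'I_k => F j)) (mem_index_enum _). Qed.

Lemma bigmax_le (F : nat -> R) k c : (0 < k)%N -> (forall i, (i < k)%N -> F i <= c) ->
  \big[Num.max/F 0%N]_(i < k) F i <= c.
Proof.
move=> hk h; elim/big_ind: _ => //; first exact: h.
  by move=> x y hx hy; rewrite ge_max hx hy.
by move=> i _; apply: h.
Qed.

Lemma attn_unique d (L : layer R d) X j i0 : (i0 <= j)%N ->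
  (forall i, (i <= j)%N -> i != i0 -> score L X j i < score L X j i0) ->
  attn_col L X j = X`_j + lV L *m X`_i0.
Proof.
move=> hi0 h; rewrite /attn_col.
set sc := score L X j.
have hm : \big[Num.max/sc 0%N]_(i < j.+1) sc i = sc i0.
  apply/eqP; rewrite eq_le; apply/andP; split.
    apply: bigmax_le => // i hi; have [->|hne] := eqVneq i i0; first exact: lexx.
    exact: ltW (h i hi hne).
  exact: (bigmax_ge sc (Ordinal (hi0 : (i0 < j.+1)%N))).
rewrite hm.
have -> : [seq i <- iota 0 j.+1 | sc i == sc i0] = [:: i0].
  rewrite (@eq_in_filter _ _ (pred1 i0)); last first.
    move=> i; rewrite mem_iota add0n /= => hi.
    have [->|hne] := eqVneq i i0; first by rewrite eqxx.
    by rewrite lt_eqF // h.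
  by rewrite filter_pred1_uniq ?iota_uniq // mem_iota.
by rewrite big_seq1 /= invr1 scale1r.
Qed.

Lemma attn_all d (L : layer R d) X j : lQ L = 0 ->
  attn_col L X j = X`_j + lV L *m ((j.+1)%:R^-1 *: \sum_(i < j.+1) X`_i).
Proof.
move=> hQ; rewrite /attn_col.
have hs : forall i, score L X j i = 0.
  by move=> i; rewrite /score hQ mulmx0 mul0mx mxE.
have hm : \big[Num.max/score L X j 0%N]_(i < j.+1) score L X j i = 0.
  by elim/big_ind: _ => [|x y -> ->|i _]; rewrite ?hs ?maxxx.
rewrite hm.
rewrite (@eq_in_filter _ _ predT); last by move=> i _; rewrite hs eqxx.
rewrite filter_predT size_iota.
have -> : iota 0 j.+1 = index_iota 0 j.+1 by rewrite /index_iota subn0.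
by rewrite big_mkord.
Qed.


Definition g1 (a : 'I_dd) : 'I_dd := if a == oPrevQ then oIsQ else oK.
Definition c1 (a : 'I_dd) : R := if (a == oPrevQ) || (a == oPv) then 1 else 0.
Definition V1 : 'M[R]_dd := \matrix_(a, b) (if b == g1 a then c1 a else 0).
Definition cst (i : 'I_dd) : R := if (nat_of_ord i < nn)%N then 1 else 0.
Definition F1 (i : 'I_dd) (y : 'cV[R]_dd) : R :=
  cst i * ((10 * y oPrevQ 0 + (1 - y oPrevQ 0) * (1 + beta * y oPv 0) - 1) * y i 0).
Definition L1 : layer R dd := @Layer R dd (delta_mx oFlag oOne) 1%:M V1 (fun y => \col_i F1 i y).
Definition V2 : 'M[R]_dd := \matrix_(a, b) (if b == a then cst a else 0).
Definition hh (z : R) := 2 - (z - 5/4) * (z - 5/4).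
Definition F2 (i : 'I_dd) (y : 'cV[R]_dd) : R := cst i * (hh (y oLen 0 * y i 0) - y i 0).
Definition L2 : layer R dd := @Layer R dd 0 0 V2 (fun y => \col_i F2 i y).
Definition L3 : layer R dd := @Layer R dd 0 0 0 (fun _ => 0).
Definition unembd (t : tok) : 'rV[R]_dd :=
  match t with TS s => delta_mx 0 (stc s) | _ => 0 end.
Definition Mdl : transformer R dd nn := @Transformer R dd nn embd posv [:: L1; L2; L3] unembd.

Lemma vc_opp d F : vc F -> @vc R d (fun i y => - F i y).
Proof.
move=> h; apply: (@vc_ext _ _ (fun i y => (fun _ _ => -1) i y * F i y)).
  by move=> i y; rewrite mulN1r.
apply: vc_mul => //; exact: vc_const.
Qed.

Ltac vct := repeat first [ apply: vc_add | apply: vc_mul | apply: vc_opp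
  | apply: (vc_coord (fun i => i)) | apply: vc_coord | apply: vc_const ].

Lemma wf_Mdl : wf_transformer Mdl.
Proof.
split.
  move=> L /=; case=> [<-|[<-|[<-|//]]].
  - apply: vc_pc; rewrite /F1; vct.
  - apply: vc_pc; rewrite /F2 /hh; vct.
  - exists [:: [::]]; split => // P; case => // <- x _ eps he.
    by exists 1 => // y _ _ i; rewrite !mxE subrr normr0.
exists oK, base; split; first by rewrite mxE ifF //; apply/negbTE; rewrite /= eqn_add2l.
split; first by [].
case=> [|||s|a] //= _; rewrite mxE //=.
- by rewrite !ifF ?addr0 //; apply/negbTE; rewrite /= ?eqn_add2l.
- by rewrite ifF //; apply/negbTE; rewrite /= addn0 eq_sym neq_ltn ltn_ord.
Qed.


Definition tQ := TQ R nn.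

Lemma st_neq (i : nat) c : (i < nn)%N -> (i == nn + c)%N = false.
Proof. by move=> h; apply/negbTE; rewrite neq_ltn (leq_trans h) ?leq_addr. Qed.
Lemma st_neq' (i : nat) c : (i < nn)%N -> (nn + c == i)%N = false.
Proof. by move=> h; rewrite eq_sym st_neq. Qed.

Ltac evs := rewrite /= ?eqn_add2l /= ?st_neq ?st_neq' ?ltn_ord //= ?addr0 ?add0r.

Definition flg (t : tok) : bool := match t with TQ | TV _ => true | _ => false end.

Lemma ev_flag t : ev t (nn + 1) = if flg t then 1 else 0.
Proof. by case: t => [|||s|a]; rewrite /ev; evs. Qed.
Lemma ev_ext t c : (c \in [:: 2; 3; 4; 6])%N -> ev t (nn + c) = 0.
Proof. by rewrite !inE => /or4P[]/eqP->; case: t => [|||s|a]; rewrite /ev; evs. Qed.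
Lemma ev_isQ t : ev t (nn + 5) = if t is TQ then 1 else 0.
Proof. by case: t => [|||s|a]; rewrite /ev; evs. Qed.
Lemma ev_k t : ev t (nn + 0) = if t is TV a then a else 0.
Proof. by case: t => [|||s|a]; rewrite /ev; evs. Qed.
Lemma ev_st t i : (i < nn)%N -> ev t i = if t is TS s then (if i == nat_of_ord s then 1 else 0) else 0.
Proof. by move=> h; case: t => [|||s|a]; rewrite /ev; evs. Qed.

Lemma posf_flag j : posf j (nn + 1) = j%:R / (j%:R + 1).
Proof. by rewrite /posf; evs. Qed.
Lemma posf_one j : posf j (nn + 2) = 1.
Proof. by rewrite /posf; evs. Qed.
Lemma posf_len j : posf j (nn + 3) = j%:R + 1.
Proof. by rewrite /posf; evs. Qed.
Lemma posf_ext j c : (c \in [:: 0; 4; 5; 6])%N -> posf j (nn + c) = 0.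
Proof. by rewrite !inE /posf => /or4P[]/eqP->; evs. Qed.
Lemma posf_st j i : (i < nn)%N -> posf j i = 0.
Proof. by move=> h; rewrite /posf !st_neq //; evs. Qed.


Fixpoint lfi (inp : seq tok) (j : nat) : nat :=
  match j with 0 => 0%N | j'.+1 => if flg (nth tQ inp j) then j else lfi inp j' end.

Lemma lfi_le inp j : (lfi inp j <= j)%N.
Proof. elim: j => //= j IH; case: ifP => // _; exact: leq_trans IH _. Qed.

Lemma lfi_flg inp j : flg (nth tQ inp 0) -> flg (nth tQ inp (lfi inp j)).
Proof. by move=> h0; elim: j => //= j IH; case: ifP. Qed.

Lemma lfi_after inp j i : (lfi inp j < i <= j)%N -> ~~ flg (nth tQ inp i).
Proof.
elim: j => [|j IH] /=; first by case: i => // i /andP[_].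
case: ifP => hf /andP[h1 h2]; first by move: (leq_trans h1 h2); rewrite ltnn.
move: h2; rewrite leq_eqVlt => /orP[/eqP->|h2]; first by rewrite hf.
by apply: IH; rewrite h1.
Qed.

Definition X0 (inp : seq tok) : seq 'cV[R]_dd :=
  mkseq (fun j => embd (nth tQ inp j) + posv j) (size inp).

Lemma X0E inp j i : (j < size inp)%N -> (X0 inp)`_j i 0 = ev (nth tQ inp j) i + posf j i.
Proof. by move=> h; rewrite /X0 nth_mkseq // !mxE embE. Qed.

Lemma frac_lt1 (a : nat) : a%:R / (a%:R + 1) < (1 : R).
Proof. by rewrite ltr_pdivrMr ?mul1r ?ltrDl // ltr_wpDl. Qed.

Lemma frac_ge0 (a : nat) : 0 <= a%:R / (a%:R + 1) :> R.
Proof. by rewrite divr_ge0 // addr_ge0. Qed.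

Lemma frac_lt (a b : nat) : (a < b)%N -> a%:R / (a%:R + 1) < b%:R / (b%:R + 1) :> R.
Proof.
move=> h; have hab : a%:R < b%:R :> R by rewrite ltr_nat.
have ha : 0 <= a%:R :> R by []. 
rewrite ltr_pdivrMr ?ltr_wpDl // mulrAC ltr_pdivlMr ?ltr_wpDl //.
nra.
Qed.

Lemma score1 inp j i : (i < size inp)%N -> (j < size inp)%N ->
  score L1 (X0 inp) j i = (if flg (nth tQ inp i) then 1 else 0) + i%:R / (i%:R + 1).
Proof.
move=> hi hj; rewrite /score /= score_delta !X0E //=.
by rewrite ev_flag posf_flag (ev_ext _ (c:=2)) // posf_one add0r mulr1.
Qed.

Lemma attn1 inp j : flg (nth tQ inp 0) -> (j < size inp)%N ->
  attn_col L1 (X0 inp) j = (X0 inp)`_j + V1 *m (X0 inp)`_(lfi inp j).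
Proof.
move=> h0 hj; apply: attn_unique; first exact: lfi_le.
move=> i hi hne.
have hl := lfi_le inp j.
rewrite !score1 ?(leq_ltn_trans hl) ?(leq_ltn_trans hi) // lfi_flg //.
have [hlt|hgt] := ltnP i (lfi inp j).
  have := frac_lt hlt; have := frac_ge0 i; case: flg => h1 h2; lra.
have hgt' : (lfi inp j < i)%N by rewrite ltn_neqAle eq_sym hne hgt.
have hn : ~~ flg (nth tQ inp i) by apply: (@lfi_after inp j i); rewrite hgt' hi.
rewrite (negPf hn) add0r.
have := frac_lt1 i; have := frac_ge0 (lfi inp j); lra.
Qed.


Definition wt (t : tok) : R :=
  10 * ev t (nn + 5) + (1 - ev t (nn + 5)) * (1 + beta * ev t (nn + 0)).

Definition X1 inp := block L1 (X0 inp).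

Lemma size_X0 inp : size (X0 inp) = size inp.
Proof. by rewrite size_mkseq. Qed.

Lemma X1_st inp j (i : 'I_dd) : flg (nth tQ inp 0) -> (j < size inp)%N -> (i < nn)%N ->
  (X1 inp)`_j i 0 = wt (nth tQ inp (lfi inp j)) * ev (nth tQ inp j) i.
Proof.
move=> h0 hj hi.
have hl : (lfi inp j < size inp)%N := leq_ltn_trans (lfi_le _ _) hj.
rewrite /X1 nth_block ?size_X0 // attn1 //=.
set a := (X0 inp)`_j + V1 *m (X0 inp)`_(lfi inp j).
have ha : forall k, a k 0 = (X0 inp)`_j k 0 + c1 k * (X0 inp)`_(lfi inp j) (g1 k) 0.
  by move=> k; rewrite /a mxE mulmx_sel.
rewrite mxE [X in _ + X]mxE /F1 !ha.
have c1i : c1 i = 0.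
  by rewrite /c1 -!val_eqE /= !st_neq.
have csti : cst i = 1 by rewrite /cst hi.
rewrite c1i csti /c1 !eqxx /= orbT /g1 eqxx.
have -> : (oPv == oPrevQ) = false by rewrite -val_eqE /= eqn_add2l.
rewrite !X0E // posf_st // (ev_ext _ (c:=4)) ?posf_ext // (ev_ext _ (c:=6)) //.
rewrite !mul0r /wt /=.
ring.
Qed.

Lemma X1_len inp j : flg (nth tQ inp 0) -> (j < size inp)%N ->
  (X1 inp)`_j oLen 0 = j%:R + 1.
Proof.
move=> h0 hj.
rewrite /X1 nth_block ?size_X0 // attn1 //=.
set a := (X0 inp)`_j + V1 *m (X0 inp)`_(lfi inp j).
have ha : forall k, a k 0 = (X0 inp)`_j k 0 + c1 k * (X0 inp)`_(lfi inp j) (g1 k) 0.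
  by move=> k; rewrite /a mxE mulmx_sel.
rewrite mxE [X in _ + X]mxE /F1 !ha.
have -> : c1 oLen = 0 by rewrite /c1 -!val_eqE /= !eqn_add2l.
have -> : cst oLen = 0 by rewrite /cst /= ltnNge leq_addr.
by rewrite X0E //= (ev_ext _ (c:=3)) // posf_len; ring.
Qed.

Lemma block3 X : block L3 X = X.
Proof.
apply: (@eq_from_nth _ 0); first by rewrite size_block.
move=> j; rewrite size_block => hj; rewrite nth_block //= addr0.
by rewrite /attn_col /= mul0mx addr0.
Qed.

Lemma row_delta (k : 'I_dd) (v : 'cV[R]_dd) : ((delta_mx (0 : 'I_1) k : 'M[R]_(1, dd)) *m v) 0 0 = v k 0.
Proof.
rewrite mxE (bigD1 k) //= big1 ?addr0; first by rewrite mxE !eqxx mul1r.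
by move=> l hl; rewrite mxE (negPf hl) andbF mul0r.
Qed.

Lemma final_col inp (s : 'I_nn) : flg (nth tQ inp 0) -> nth tQ inp (size inp).-1 = tQ ->
  (0 < size inp)%N ->
  (run Mdl inp)`_(size inp).-1 (stc s) 0 =
  hh (\sum_(j < size inp) wt (nth tQ inp (lfi inp j)) * ev (nth tQ inp j) s).
Proof.
move=> h0 hlast hpos.
rewrite /run /=.
change (mkseq _ (size inp)) with (X0 inp).
rewrite block3.
change (block L1 (X0 inp)) with (X1 inp).
have hJ : ((size inp).-1 < size (X1 inp))%N by rewrite size_block size_X0 prednK.
rewrite nth_block // attn_all //= prednK //.
set Y := X1 inp.
set S := \sum_(i < size inp) Y`_i.
set b := Y`_(size inp).-1 + V2 *m ((size inp)%:R^-1 *: S).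
have hb : forall k, b k 0 = Y`_(size inp).-1 k 0 + cst k * ((size inp)%:R^-1 * S k 0).
  by move=> k; rewrite /b mxE (mulmx_sel (fun a => a)) mxE.
rewrite mxE [X in _ + X]mxE /F2 !hb.
have hs : (nat_of_ord (stc s) < nn)%N by rewrite /= ltn_ord.
have -> : cst (stc s) = 1 by rewrite /cst hs.
have -> : cst oLen = 0 by rewrite /cst /= ltnNge leq_addr.
have hJ' : ((size inp).-1 < size inp)%N by rewrite prednK.
rewrite /Y X1_st // X1_len // hlast ev_st //= mulr0 !mul1r mul0r !addr0 !add0r.
rewrite addrC subrK.
congr hh.
rewrite natr1 prednK // mulrA.
rewrite mulfV ?mul1r; last by rewrite pnatr_eq0 -lt0n.
rewrite /S summxE; apply: eq_bigr => j _.
by rewrite X1_st // ?ltn_ord.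
Qed.


Lemma logit_TS inp (s : 'I_nn) : flg (nth tQ inp 0) -> nth tQ inp (size inp).-1 = tQ ->
  (0 < size inp)%N ->
  logit Mdl inp (TS R s) =
  hh (\sum_(j < size inp) wt (nth tQ inp (lfi inp j)) * ev (nth tQ inp j) s).
Proof. by move=> *; rewrite /logit /= row_delta final_col. Qed.

Lemma logit_other inp t : (if t is TS _ then false else true) -> logit Mdl inp t = 0.
Proof. by case: t => // *; rewrite /logit /= mul0mx mxE. Qed.

Definition upd (a t : tok) := if flg t then t else a.
Definition lastF (acc : tok) (l : seq tok) := foldl upd acc l.

Lemma lfi_lastF inp j : flg (nth tQ inp 0) -> (j < size inp)%N ->
  nth tQ inp (lfi inp j) = lastF tQ (take j.+1 inp).
Proof.
move=> h0; elim: j => [|j IH] hj /=.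
  by case: inp h0 hj => //= t l h0 _; rewrite take0 /= /upd h0.
rewrite (take_nth tQ) // /lastF foldl_rcons -/(lastF _ _) -IH ?(ltnW hj) //.
by rewrite /upd; case: ifP.
Qed.

Fixpoint Gr (i : nat) (acc : tok) (l : seq tok) : R :=
  match l with
  | [::] => 0
  | t :: l' => wt (upd acc t) * ev t i + Gr i (upd acc t) l'
  end.

Lemma Gr_sum i acc l :
  \sum_(j < size l) wt (lastF acc (take j.+1 l)) * ev (nth tQ l j) i = Gr i acc l.
Proof.
elim: l acc => [|t l IH] acc /=; first by rewrite big_ord0.
by rewrite big_ord_recl /= take0 /= -IH.
Qed.

Lemma Gr_cat i acc l1 l2 : Gr i acc (l1 ++ l2) = Gr i acc l1 + Gr i (lastF acc l1) l2.
Proof. by elim: l1 acc => [|t l IH] acc /=; rewrite ?add0r // IH addrA. Qed.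

Lemma logit_Gr inp (s : 'I_nn) : nth tQ inp 0 = tQ -> nth tQ inp (size inp).-1 = tQ ->
  (0 < size inp)%N -> logit Mdl inp (TS R s) = hh (Gr s tQ inp).
Proof.
move=> h0 hl hp; rewrite logit_TS ?h0 // -Gr_sum; congr hh.
by apply: eq_bigr => j _; rewrite lfi_lastF ?h0.
Qed.


Lemma wt_Q : wt tQ = 10.
Proof. by rewrite /wt ev_isQ ev_k subrr mul0r addr0 mulr1. Qed.
Lemma wt_V v : wt (@TV R nn v) = 1 + beta * v.
Proof. by rewrite /wt ev_isQ ev_k mulr0 add0r subr0 mul1r. Qed.

Definition bi (i : nat) (c : 'I_nn) : R := if i == nat_of_ord c then 1 else 0.

Lemma Gr_ch i v (cs : seq 'I_nn) : (i < nn)%N ->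
  Gr i (@TV R nn v) (map (@TS R nn) cs) = (1 + beta * v) * \sum_(c <- cs) bi i c.
Proof.
move=> hi; elim: cs => [|c cs IH] /=; first by rewrite big_nil mulr0.
by rewrite big_cons /upd /= IH wt_V mulrDr.
Qed.

Lemma lastF_ch acc (cs : seq 'I_nn) : lastF acc (map (@TS R nn) cs) = acc.
Proof. by elim: cs. Qed.

Lemma flat_cons (f : 'I_nn * R -> seq tok) sv traj r :
  flatten (map f (sv :: traj)) ++ r = f sv ++ (flatten (map f traj) ++ r).
Proof. by rewrite /= catA. Qed.

Lemma Gr_blk i acc (x : 'I_nn) (v : R) (cs : seq 'I_nn) rest : (i < nn)%N ->
  Gr i acc (([:: TQ R nn; TS R x; TPct R nn; @TV R nn v; THash R nn] ++ map (@TS R nn) cs) ++ rest)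
  = (10 * bi i x + (1 + beta * v) * \sum_(c <- cs) bi i c) + Gr i (@TV R nn v) rest.
Proof.
move=> hi; rewrite -catA Gr_cat /= /upd /= Gr_cat Gr_ch // lastF_ch.
rewrite -/tQ wt_Q !st_neq // !mulr0 !addr0 !add0r /bi.
by rewrite !mulr0 add0r addr0 addrA.
Qed.

Lemma Gr_encode (i : nat) (N : 'I_nn -> seq 'I_nn) traj acc : (i < nn)%N ->
  Gr i acc (encode N traj) =
  \sum_(sv <- traj) (10 * bi i sv.1 + (1 + beta * sv.2) * \sum_(c <- N sv.1) bi i c).
Proof.
move=> hi; rewrite /encode; elim: traj acc => [|sv traj IH] acc.
  by rewrite big_nil /= !st_neq // !addr0 mulr0.
by rewrite flat_cons Gr_blk // IH big_cons.
Qed.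


Lemma sum_bi (s : 'I_nn) (cs : seq 'I_nn) : uniq cs ->
  \sum_(c <- cs) bi s c = if s \in cs then 1 else 0.
Proof.
elim: cs => [|c cs IH] /=; first by rewrite big_nil.
move=> /andP[hc hu]; rewrite big_cons IH // inE /bi.
have -> : (nat_of_ord s == nat_of_ord c) = (s == c) by [].
case: eqP => [->|_] /=; first by rewrite (negPf hc) addr0.
by rewrite add0r.
Qed.

Lemma In_mem (U : eqType) (x : U) s : x \in s -> List.In x s.
Proof.
elim: s => //= a s IH; rewrite inE => /orP[/eqP->|h]; first by left.
by right; apply: IH.
Qed.

Lemma uniq_traj (root : 'I_nn) (N : 'I_nn -> seq 'I_nn) (traj : seq ('I_nn * R)) : valid_traj (R:=R) T root N traj -> uniq (map fst traj).
Proof.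
move=> [_ [_ [_ [hf _]]]].
suff : forall k, uniq (map fst (take k traj)).
  by move=> /(_ (size traj)); rewrite take_size.
elim=> [|k IH]; first by rewrite take0.
have [hk|hk] := ltnP k (size traj); last first.
  by rewrite take_oversize ?(leqW hk) //; rewrite take_oversize in IH.
rewrite (take_nth (root, 0)) // map_rcons rcons_uniq IH andbT.
case: k IH hk => [|k] IH hk; first by rewrite take0.
by have := hf k hk; rewrite inE => /andP[].
Qed.


Lemma par_sum (s : 'I_nn) (N : 'I_nn -> seq 'I_nn) (traj : seq ('I_nn * R)) (g : 'I_nn * R -> R) :
  uniq (map fst traj) -> (forall x y, s \in N x -> s \in N y -> x = y) ->
  \sum_(sv <- traj) (if s \in N sv.1 then g sv else 0) =
  if has (fun sv => s \in N sv.1) traj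
  then g (nth (s, 0) traj (find (fun sv => s \in N sv.1) traj)) else 0.
Proof.
move=> hu hp; elim: traj hu => [|sv l IH] /=; first by rewrite big_nil.
move=> /andP[hn hu]; rewrite big_cons IH //.
case: ifP => hs /=; last by rewrite add0r.
have -> : has (fun sv0 => s \in N sv0.1) l = false.
  apply/negbTE/hasP => [[sv' hin hs']].
  have e := hp _ _ hs' hs.
  by move: hn; rewrite -e (map_f fst hin).
by rewrite addr0.
Qed.

Lemma sel_sum (s : 'I_nn) (traj : seq ('I_nn * R)) :
  uniq (map fst traj) ->
  \sum_(sv <- traj) 10 * bi s sv.1 = if s \in map fst traj then 10 else 0.
Proof.
elim: traj => [|sv l IH] /=; first by rewrite big_nil.
move=> /andP[hn hu]; rewrite big_cons IH // inE /bi.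
have -> : (nat_of_ord s == nat_of_ord sv.1) = (s == sv.1) by [].
case: eqP => [e|_] /=; first by rewrite -e in hn; rewrite (negPf hn) !mulr1 addr0.
by rewrite mulr0 add0r.
Qed.

Lemma S_val (root : 'I_nn) (N : 'I_nn -> seq 'I_nn) (traj : seq ('I_nn * R)) (s : 'I_nn) :
  is_tree B root N -> valid_traj (R:=R) T root N traj ->
  \sum_(sv <- traj) (10 * bi s sv.1 + (1 + beta * sv.2) * \sum_(c <- N sv.1) bi s c) =
  (if s \in map fst traj then 10 else 0) +
  (if has (fun sv => s \in N sv.1) traj then 1 + beta * vhat N traj s else 0).
Proof.
move=> ht hv; have hu := uniq_traj hv.
have [hun [_ [_ [hpar _]]]] := ht.
rewrite big_split /= sel_sum //; congr (_ + _).
rewrite /vhat -(@par_sum s N traj (fun sv => 1 + beta * sv.2)) //; last by move=> x y; apply: hpar.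
apply: eq_bigr => sv _; rewrite sum_bi //.
by case: ifP; rewrite ?mulr1 ?mulr0.
Qed.


Lemma hh_front z : 1 <= z <= 5/4 -> 31/16 <= hh z.
Proof. move=> /andP[h1 h2]; rewrite /hh; nra. Qed.

Lemma hh_non z : z = 0 \/ 10 <= z -> hh z <= 7/16.
Proof. rewrite /hh; case=> [->|h]; first by lra. nra. Qed.

Lemma hh_lt (v v' : R) : 0 <= v -> v < v' -> v' <= 1 -> hh (1 + 1/4 * v) < hh (1 + 1/4 * v').
Proof. move=> h0 h1 h2; rewrite /hh; nra. Qed.

Lemma hh_le (v v' : R) : 0 <= v -> v <= v' -> v' <= 1 -> hh (1 + 1/4 * v) <= hh (1 + 1/4 * v').
Proof. move=> h0 h1 h2; rewrite /hh; nra. Qed.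

Lemma enc_props (N : 'I_nn -> seq 'I_nn) traj :
  [/\ nth tQ (encode N traj) 0 = tQ, nth tQ (encode N traj) (size (encode N traj)).-1 = tQ
    & (0 < size (encode N traj))%N].
Proof.
rewrite /encode; split.
- by case: traj.
- by rewrite nth_last last_cat.
- by rewrite size_cat addn1.
Qed.

Lemma vhat_range (root : 'I_nn) (N : 'I_nn -> seq 'I_nn) (traj : seq ('I_nn * R)) (s : 'I_nn) :
  valid_traj (R:=R) T root N traj -> has (fun sv => s \in N sv.1) traj ->
  0 <= vhat N traj s <= 1.
Proof.
move=> [_ [_ [hb _]]] hh0; apply: hb; apply: In_mem; apply: mem_nth.
by rewrite -has_find.
Qed.

Lemma logit_val (root : 'I_nn) (N : 'I_nn -> seq 'I_nn) (traj : seq ('I_nn * R)) (s : 'I_nn) :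
  is_tree B root N -> valid_traj (R:=R) T root N traj ->
  logit Mdl (encode N traj) (TS R s) =
  hh ((if s \in map fst traj then 10 else 0) +
      (if has (fun sv => s \in N sv.1) traj then 1 + beta * vhat N traj s else 0)).
Proof.
move=> ht hv; have [h0 hl hp] := enc_props N traj.
by rewrite logit_Gr // Gr_encode // (S_val s ht hv).
Qed.

Hypothesis hbeta : 0 <= beta <= 1/4.

Lemma logit_F (root : 'I_nn) (N : 'I_nn -> seq 'I_nn) (traj : seq ('I_nn * R)) (s : 'I_nn) :
  is_tree B root N -> valid_traj (R:=R) T root N traj -> s \in frontier N traj ->
  logit Mdl (encode N traj) (TS R s) = hh (1 + beta * vhat N traj s) /\ 0 <= vhat N traj s <= 1.
Proof.
move=> ht hv; rewrite inE => /andP[hh1 hh2].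
rewrite (logit_val s ht hv) hh1 (negPf hh2) add0r; split => //.
exact: (vhat_range hv).
Qed.

Lemma logit_F_ge (root : 'I_nn) (N : 'I_nn -> seq 'I_nn) (traj : seq ('I_nn * R)) (s : 'I_nn) :
  is_tree B root N -> valid_traj (R:=R) T root N traj -> s \in frontier N traj ->
  31/16 <= logit Mdl (encode N traj) (TS R s).
Proof.
move=> ht hv hs; have [-> /andP[h1 h2]] := logit_F ht hv hs.
apply: hh_front; move/andP: hbeta => [b1 b2]; apply/andP; split; nra.
Qed.

Lemma logit_nF (root : 'I_nn) (N : 'I_nn -> seq 'I_nn) (traj : seq ('I_nn * R)) (s : 'I_nn) :
  is_tree B root N -> valid_traj (R:=R) T root N traj -> s \notin frontier N traj ->
  logit Mdl (encode N traj) (TS R s) <= 7/16.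
Proof.
move=> ht hv; rewrite inE negb_and negbK => hs.
rewrite (logit_val s ht hv); apply: hh_non.
case: ifP => h1; case: ifP => h2 /=.
- right; have := vhat_range hv h2; move/andP: hbeta => [b1 b2] /andP[v1 v2]; nra.
- by right; rewrite addr0 lexx.
- by move: hs; rewrite h1 h2.
- by left; rewrite addr0.
Qed.


Lemma In_mem' (U : eqType) (x : U) s : List.In x s -> x \in s.
Proof. elim: s => //= a s IH [->|h]; rewrite inE ?eqxx //; by rewrite IH ?orbT. Qed.

Lemma In_TS (s : seq 'I_nn) t : List.In t (map (@TS R nn) s) <-> exists x, t = TS R x /\ x \in s.
Proof.
rewrite List.in_map_iff; split.
  by case=> x [<- h]; exists x; split => //; apply: In_mem'.
by case=> x [-> h]; exists x; split => //; apply: In_mem.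
Qed.

Lemma NoDup_TS (s : seq 'I_nn) : uniq s -> List.NoDup (map (@TS R nn) s).
Proof.
elim: s => [|x s IH] /=; first by constructor.
move=> /andP[hx hu]; constructor; last exact: IH.
move/In_TS => [y [e hy]]; have exy : x = y by case: e. by move: hx; rewrite exy hy.
Qed.

Lemma ntd_of_set inp (G : {set 'I_nn}) (p : tok -> R) :
  G != set0 ->
  (forall t, is_argmax Mdl inp t <-> exists s, t = TS R s /\ s \in G) ->
  (forall s, p (TS R s) = if s \in G then #|G|%:R^-1 else 0) ->
  (forall t, (if t is TS _ then false else true) -> p t = 0) ->
  next_token_dist Mdl inp p.
Proof.
move=> hG hA hp hq.
exists (map (@TS R nn) (enum G)); split; [|split; [|split; [|split]]].
- case/set0Pn: hG => x hx; have : x \in enum G by rewrite mem_enum.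
  by case: (enum G).
- exact/NoDup_TS/enum_uniq.
- move=> t; rewrite In_TS hA; split; case=> x [-> h]; exists x; split => //.
    by rewrite -mem_enum.
  by rewrite mem_enum.
- move=> t /In_TS [x [-> h]]; rewrite hp -mem_enum h size_map -cardE //.
- move=> t ht; case: t ht => [|||x|a] ht; try by rewrite hq.
  rewrite hp; case: ifP => // hx; exfalso; apply: ht; apply/In_TS.
  by exists x; rewrite mem_enum.
Qed.


Lemma main_uniform : beta = 0 -> implements T B Mdl (@uniform_policy R nn).
Proof.
move=> hb0 root N traj ht hv.
have hF : frontier N traj != set0 by case: hv => [_ [_ [_ [_ h]]]].
have hlogF : forall s, s \in frontier N traj -> logit Mdl (encode N traj) (TS R s) = 31/16.
  move=> s hs; have [-> _] := logit_F ht hv hs; rewrite hb0 mul0r addr0 /hh; lra.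
apply (ntd_of_set hF).
- move=> t; split.
  + move=> [_ hmax]; case/set0Pn: hF => s0 hs0.
    have h0 := hmax (TS R s0) I; rewrite hlogF // in h0.
    case: t hmax h0 => [|||x|a] _ h0; try (rewrite logit_other // in h0; lra).
    exists x; split => //; apply/negPn/negP => hx; have := logit_nF ht hv hx; lra.
  + case=> x [-> hx]; split => // t' _; rewrite hlogF //.
    case: t' => [|||y|a]; try (rewrite logit_other //; lra).
    have [hy|hy] := boolP (y \in frontier N traj); first by rewrite hlogF.
    have := logit_nF ht hv hy; lra.
- by [].
- by case.
Qed.

Lemma main_greedy : beta = 1/4 -> implements T B Mdl (@greedy_policy R nn).
Proof.
move=> hb0 root N traj ht hv.
have hF : frontier N traj != set0 by case: hv => [_ [_ [_ [_ h]]]].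
have hlogF : forall s, s \in frontier N traj ->
  logit Mdl (encode N traj) (TS R s) = hh (1 + 1/4 * vhat N traj s) /\ 0 <= vhat N traj s <= 1.
  by move=> s hs; rewrite -hb0; exact: (logit_F ht hv hs).
have hG : greedy_set N traj != set0.
  case/set0Pn: hF => s0 hs0.
  case: (@arg_maxP _ R _ s0 (fun s => s \in frontier N traj) (vhat N traj) hs0) => i hi hmax.
  apply/set0Pn; exists i; rewrite inE hi /=; apply/forallP => s'; apply/implyP => hs'.
  exact: hmax.
apply (ntd_of_set hG).
- move=> t; split.
  + move=> [_ hmax]; case/set0Pn: hF => s0 hs0.
    have h0 := hmax (TS R s0) I; have h1 := logit_F_ge ht hv hs0.
    case: t hmax h0 => [|||x|a] hmax h0; try (rewrite [X in _ <= X]logit_other // in h0; lra).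
    have hx : x \in frontier N traj.
      by apply/negPn/negP => hx; have := logit_nF ht hv hx; lra.
    exists x; split => //; rewrite inE hx /=; apply/forallP => s'; apply/implyP => hs'.
    have := hmax (TS R s') I; have [-> /andP[a1 a2]] := hlogF _ hs'.
    have [-> /andP[b1 b2]] := hlogF _ hx.
    move=> h; rewrite leNgt; apply/negP => hlt.
    by move: h; rewrite leNgt (hh_lt b1 hlt a2).
  + case=> x [-> hx]; move: hx; rewrite inE => /andP[hx hall].
    have hxge := logit_F_ge ht hv hx.
    split => // t' _.
    case: t' => [|||y|a]; try (rewrite logit_other //; lra).
    have [hy|hy] := boolP (y \in frontier N traj); last first.
      have := logit_nF ht hv hy; lra.
    have [-> /andP[a1 a2]] := hlogF _ hy; have [-> /andP[b1 b2]] := hlogF _ hx.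
    apply: hh_le => //; exact: (implyP (forallP hall y)).
- by [].
- by case.
Qed.

End Model.


Theorem theorem1 (R : realType) (T B : nat) (hT : (1 <= T)%N) (hB : (1 <= B)%N) :
  (exists M : transformer R (10 + T * B) (T * B + 1),
      size (layers M) = 3%N /\ wf_transformer M /\
      implements T B M (@uniform_policy R (T * B + 1))) /\
  (exists M : transformer R (10 + T * B) (T * B + 1),
      size (layers M) = 3%N /\ wf_transformer M /\
      implements T B M (@greedy_policy R (T * B + 1))).
Proof.
split.
- exists (@Mdl R T B 0); split; first by [].
  split; first exact: wf_Mdl.
  apply: main_uniform => //; rewrite lexx /=; lra.
- exists (@Mdl R T B (1/4)); split; first by [].
  split; first exact: wf_Mdl.
  apply: main_greedy => //; apply/andP; split; lra.
Qed.
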